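(* Let $E$ be a symmetric operator defined on a dense domain $\mathcal D$ of a Hilbert space $\mathcal H$. Let $\mathbf d=\{d_i\}_{i\in\mathbb N}$ and $\boldsymbol\lambda=\{\lambda_i\}_{i\in\mathbb N}$ be two nondecreasing real sequences such that \[ \delta_k:=\sum_{i=1}^k(d_i-\lambda_i)\ge0\qquad\text{for all }k\in\mathbb N, \] and suppose $\delta_k=0$ for infinitely many $k\in\mathbb N$. Let $\{f_i\}_{i\in\mathbb N}\subset\mathcal D$ be an orthonormal sequence with $\langle Ef_i,f_i\rangle=\lambda_i$ for all $i$. Then there exists an orthonormal sequence $\{e_i\}_{i\in\mathbb N}$, each element of which lies in the (algebraic) linear span of $\{f_i\}_{i\in\mathbb N}$, such that $\overline{\operatorname{span}}\{e_i\}=\overline{\operatorname{span}}\{f_i\}$ and $\langle Ee_i,e_i\rangle=d_i$ for all $i\in\mathbb N$.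
   Context: $E$ symmetric means $\langle Ef,g\rangle=\langle f,Eg\rangle$ for all $f,g\in\mathcal D$. $\overline{\operatorname{span}}$ is the closed linear span. *)

(* Defs.v *)
From mathcomp Require Import all_boot all_order all_algebra.
From mathcomp Require Export complex.
From mathcomp Require Export reals.
Import GRing.Theory Num.Theory.

Set Implicit Arguments.
Unset Strict Implicit.
Unset Printing Implicit Defensive.

Local Open Scope ring_scope.
Local Open Scope complex_scope.

Section Hilbert.
Variables (R : realType) (H : lmodType R[i]) (ip : H -> H -> R[i]).

Definition is_inner_product : Prop :=
  [/\ (forall (a : R[i]) (x y z : H), ip (a *: x + y) z = a * ip x z + ip y z),
      (forall x y : H, ip y x = (ip x y)^*),
      (forall x : H, 0 <= ip x x) &
      (forall x : H, ip x x = 0 -> x = 0)].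

Definition dist_lt (x y : H) (eps : R) : Prop := ip (x - y) (x - y) < (eps ^+ 2)%:C.

Definition complete_ip : Prop :=
  forall u : nat -> H,
    (forall eps : R, 0 < eps -> exists N, forall m n, (N <= m)%N -> (N <= n)%N ->
        dist_lt (u m) (u n) eps) ->
    exists x : H, forall eps : R, 0 < eps -> exists N, forall n, (N <= n)%N ->
        dist_lt (u n) x eps.

Definition is_hilbert : Prop := is_inner_product /\ complete_ip.

Definition in_span (f : nat -> H) (v : H) : Prop :=
  exists (n : nat) (c : nat -> R[i]), v = \sum_(i < n) c i *: f i.

Definition in_closed_span (f : nat -> H) (v : H) : Prop :=
  forall eps : R, 0 < eps -> exists w, in_span f w /\ dist_lt v w eps.

Definition ip_orthonormal (f : nat -> H) : Prop :=
  forall i j : nat, ip (f i) (f j) = (i == j)%:R.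

Definition is_subspace (D : H -> Prop) : Prop :=
  D 0 /\ forall (a : R[i]) (x y : H), D x -> D y -> D (a *: x + y).

Definition dense (D : H -> Prop) : Prop :=
  forall (x : H) (eps : R), 0 < eps -> exists y, D y /\ dist_lt x y eps.

(* E : D -> H linear operator (values outside D are irrelevant) *)
Definition linear_on (D : H -> Prop) (E : H -> H) : Prop :=
  forall (a : R[i]) (x y : H), D x -> D y -> E (a *: x + y) = a *: E x + E y.

Definition densely_defined_symmetric (D : H -> Prop) (E : H -> H) : Prop :=
  [/\ is_subspace D, dense D, linear_on D E &
      forall f g : H, D f -> D g -> ip (E f) g = ip f (E g)].

End Hilbert.

(* Main.v *)
Require Import Defs.
From mathcomp Require Import all_boot all_order all_algebra.
From mathcomp Require Import complex reals ring lra.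
From Stdlib Require Import ClassicalEpsilon Classical.
Import Order.TTheory GRing.Theory Num.Theory.
Set Implicit Arguments.
Unset Strict Implicit.
Unset Printing Implicit Defensive.
Local Open Scope ring_scope.
Local Open Scope complex_scope.

Lemma ipZD (R : realType) (H : lmodType R[i]) (ip : H -> H -> R[i]) :
  is_inner_product ip ->
  [/\ (forall a x z, ip (a *: x) z = a * ip x z),
      (forall x y z, ip (x + y) z = ip x z + ip y z),
      (forall a x z, ip z (a *: x) = a^* * ip z x) &
      (forall x y z, ip z (x + y) = ip z x + ip z y)].
Proof.
case=> hl hc _ _.
have h0 : forall z, ip 0 z = 0.
  move=> z; have := hl 1 0 0 z; rewrite scale1r addr0 mul1r.
  by move/(congr1 (fun t => t - ip 0 z)); rewrite subrr addrK.
have hZ : forall a x z, ip (a *: x) z = a * ip x z.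
  by move=> a x z; rewrite -[a *: x]addr0 hl h0 addr0.
have hD : forall x y z, ip (x + y) z = ip x z + ip y z.
  by move=> x y z; rewrite -[x]scale1r hl mul1r scale1r.
split=> //.
- by move=> a x z; rewrite hc hZ rmorphM /= -hc.
- by move=> x y z; rewrite hc hD rmorphD /= -!hc.
Qed.


Definition sp (R : realType) (H : lmodType R[i]) (g : nat -> H) (n : nat) (v : H) :=
  exists c : nat -> R[i], v = \sum_(i < n) c i *: g i.

Lemma sp_lin (R : realType) (H : lmodType R[i]) (g : nat -> H) n a x y :
  sp g n x -> sp g n y -> sp g n (a *: x + y).
Proof.
case=> c -> [c' ->]; exists (fun i => a * c i + c' i).
rewrite scaler_sumr -big_split /=; apply: eq_bigr => i _.
by rewrite scalerDl scalerA.
Qed.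

Lemma sp_0 (R : realType) (H : lmodType R[i]) (g : nat -> H) n : sp g n 0.
Proof. by exists (fun _ => 0); rewrite big1 // => i _; rewrite scale0r. Qed.

Lemma sp_add (R : realType) (H : lmodType R[i]) (g : nat -> H) n x y :
  sp g n x -> sp g n y -> sp g n (x + y).
Proof. by move=> hx hy; rewrite -[x]scale1r; apply: sp_lin. Qed.

Lemma sp_scale (R : realType) (H : lmodType R[i]) (g : nat -> H) n a x :
  sp g n x -> sp g n (a *: x).
Proof. by move=> hx; rewrite -[_ *: x]addr0; apply: sp_lin => //; apply: sp_0. Qed.

Lemma sp_g (R : realType) (H : lmodType R[i]) (g : nat -> H) n i :
  (i < n)%N -> sp g n (g i).
Proof.
move=> lt; exists (fun j => (j == i)%:R).
rewrite (bigD1 (Ordinal lt)) //= eqxx scale1r big1 ?addr0 // => j.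
by rewrite -val_eqE /= => /negbTE ->; rewrite scale0r.
Qed.

Lemma sp_mono (R : realType) (H : lmodType R[i]) (g : nat -> H) n m v :
  (n <= m)%N -> sp g n v -> sp g m v.
Proof.
move=> le [c ->]; elim: n le => [|n IH] le.
  by rewrite big_ord0; apply: sp_0.
rewrite big_ord_recr /=; apply: sp_add; first by apply: IH; apply: ltnW.
by apply: sp_scale; apply: sp_g.
Qed.

Lemma sp_trans (R : realType) (H : lmodType R[i]) (g g' : nat -> H) n m v :
  (forall i, (i < n)%N -> sp g' m (g i)) -> sp g n v -> sp g' m v.
Proof.
move=> hg [c ->]; elim: n hg => [|n IH] hg.
  by rewrite big_ord0; apply: sp_0.
rewrite big_ord_recr /=; apply: sp_add.
  by apply: IH => i lt; apply: hg; apply: ltnW.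
by apply: sp_scale; apply: hg.
Qed.

Lemma sp_ext (R : realType) (H : lmodType R[i]) (g g' : nat -> H) n v :
  (forall i, (i < n)%N -> g i = g' i) -> sp g n v -> sp g' n v.
Proof.
move=> e [c ->]; exists c; apply: eq_bigr => i _; by rewrite e.
Qed.

Lemma in_span_sp (R : realType) (H : lmodType R[i]) (g : nat -> H) v :
  in_span g v <-> exists n, sp g n v.
Proof. by split=> [[n [c ->]]|[n [c ->]]]; exists n; [exists c|exists c]. Qed.

Lemma in_span_trans (R : realType) (H : lmodType R[i]) (g g' : nat -> H) v :
  (forall i, in_span g' (g i)) -> in_span g v -> in_span g' v.
Proof.
move=> hg /in_span_sp [n [c ->]]; apply/in_span_sp.
elim: n => [|n [m IH]].
  by exists 0%N; rewrite big_ord0; apply: sp_0.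
have /in_span_sp [m' h'] := hg n.
exists (maxn m m'); rewrite big_ord_recr /=; apply: sp_add.
  by apply: sp_mono IH; apply: leq_maxl.
by apply: sp_scale; apply: sp_mono h'; apply: leq_maxr.
Qed.


Lemma alg1 (R : realType) (al be r q : R) : al != 0 -> q ^+ 2 = r ^+ 2 + al * be ->
  al * ((r + q) / al) ^+ 2 - 2 * r * ((r + q) / al) - be = 0.
Proof.
move=> h hq.
have -> : be = (q ^+ 2 - r ^+ 2) / al.
  by rewrite hq addrAC subrr add0r mulrAC divff ?mul1r.
field; exact h.
Qed.
Lemma alg2 (R : realType) (a b r t c0 n : R) : n ^+ 2 = 1 + c0 ^+ 2 -> n != 0 ->
  (t - a) * c0 ^+ 2 - 2 * r * c0 - (b - t) = 0 ->
  (c0 / n) ^+ 2 * a + 2 * (c0 / n) * (1 / n) * r + (1 / n) ^+ 2 * b = t.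
Proof.
move=> hn nn key.
have e : 2 * (c0 / n) * (1 / n) * r = 2 * c0 * r / n ^+ 2 by field.
have m0 : 1 + c0 ^+ 2 != 0 by rewrite -hn expf_neq0.
rewrite e !expr_div_n hn expr1n.
apply/eqP; rewrite -subr_eq0; apply/eqP.
have -> : c0 ^+ 2 / (1 + c0 ^+ 2) * a + 2 * c0 * r / (1 + c0 ^+ 2) + 1 / (1 + c0 ^+ 2) * b - t
  = - ((t - a) * c0 ^+ 2 - 2 * r * c0 - (b - t)) / (1 + c0 ^+ 2).
  by field.
by rewrite key oppr0 mul0r.
Qed.
Lemma solver (R : realType) (a b r t : R) : a < t -> t <= b ->
  exists c s : R, c ^+ 2 + s ^+ 2 = 1 /\ c ^+ 2 * a + 2 * c * s * r + s ^+ 2 * b = t.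
Proof.
move=> hat htb.
have alp : 0 < t - a by rewrite subr_gt0.
have bep : 0 <= b - t by rewrite subr_ge0.
have hq : Num.sqrt (r ^+ 2 + (t - a) * (b - t)) ^+ 2 = r ^+ 2 + (t - a) * (b - t).
  by rewrite sqr_sqrtr // addr_ge0 ?sqr_ge0 ?mulr_ge0 // ltW.
have key := @alg1 R _ _ _ _ (negbT (gt_eqF alp)) hq.
set c0 := (_ / _) in key; clearbody c0.
have np : 0 < 1 + c0 ^+ 2 by rewrite ltr_pwDl ?sqr_ge0.
have hn : Num.sqrt (1 + c0 ^+ 2) ^+ 2 = 1 + c0 ^+ 2 by rewrite sqr_sqrtr // ltW.
have nn : Num.sqrt (1 + c0 ^+ 2) != 0 by rewrite sqrtr_eq0 -ltNge.
exists (c0 / Num.sqrt (1 + c0 ^+ 2)), (1 / Num.sqrt (1 + c0 ^+ 2)); split.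
  by rewrite !expr_div_n hn expr1n -mulrDl addrC divff // gt_eqF.
exact: (@alg2 R).
Qed.


Definition grot (R : realType) (H : lmodType R[i]) (G : nat -> H) (k m : nat) (c s : R)
  : nat -> H := fun i =>
  if i == k then c%:C *: G k + s%:C *: G m
  else if i == m then (-s)%:C *: G k + c%:C *: G m else G i.

Lemma comb2 (R : realType) (H : lmodType R[i]) (x y : H) (c s c' s' : R) :
  c'%:C *: (c%:C *: x + s%:C *: y) + s'%:C *: ((-s)%:C *: x + c%:C *: y) =
  (c' * c - s' * s)%:C *: x + (c' * s + s' * c)%:C *: y.
Proof.
rewrite !scalerDr !scalerA addrACA -!scalerDl; congr (_ *: _ + _ *: _).
  by rewrite -!rmorphM -rmorphD /= mulrN.
by rewrite -!rmorphM -rmorphD.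
Qed.

Lemma grot_inv (R : realType) (H : lmodType R[i]) (G : nat -> H) k m (c s : R) n i :
  c ^+ 2 + s ^+ 2 = 1 -> k != m -> (k < n)%N -> (m < n)%N -> (i < n)%N ->
  sp (grot G k m c s) n (G i).
Proof.
move=> h1 km kn mn ilt.
have ek : grot G k m c s k = c%:C *: G k + s%:C *: G m by rewrite /grot eqxx.
have em : grot G k m c s m = (-s)%:C *: G k + c%:C *: G m.
  by rewrite /grot eqxx eq_sym (negbTE km).
case: (eqVneq i k) => [->|ik].
  have -> : G k = c%:C *: grot G k m c s k + (-s)%:C *: grot G k m c s m.
    rewrite ek em comb2 (_ : c * c - - s * s = 1); last by rewrite mulNr opprK -!expr2.
    by rewrite (_ : c * s + - s * c = 0) ?scale1r ?scale0r ?addr0 // mulNr mulrC subrr.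
  by apply: sp_lin; [apply: sp_g|apply: sp_scale; apply: sp_g].
case: (eqVneq i m) => [->|im].
  have -> : G m = s%:C *: grot G k m c s k + c%:C *: grot G k m c s m.
    rewrite ek em comb2 (_ : s * c - c * s = 0); last by rewrite mulrC subrr.
    by rewrite (_ : s * s + c * c = 1) ?scale1r ?scale0r ?add0r // -!expr2 addrC.
  by apply: sp_lin; [apply: sp_g|apply: sp_scale; apply: sp_g].
have -> : G i = grot G k m c s i by rewrite /grot (negbTE ik) (negbTE im).
exact: sp_g.
Qed.

Lemma grot_fwd (R : realType) (H : lmodType R[i]) (G : nat -> H) k m (c s : R) i :
  sp G (maxn i (maxn k m)).+1 (grot G k m c s i).
Proof.
rewrite /grot; case: ifP => _.
  apply: sp_lin; last apply: sp_scale; apply: sp_g; rewrite ltnS;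
  by rewrite ?leq_max ?leqnn ?orbT.
case: ifP => _.
  apply: sp_lin; last apply: sp_scale; apply: sp_g; rewrite ltnS;
  by rewrite ?leq_max ?leqnn ?orbT.
by apply: sp_g; rewrite ltnS leq_max leqnn.
Qed.

Lemma grot_other (R : realType) (H : lmodType R[i]) (G : nat -> H) k m (c s : R) i :
  i != k -> i != m -> grot G k m c s i = G i.
Proof. by rewrite /grot => /negbTE -> /negbTE ->. Qed.


Lemma ip2 (R : realType) (H : lmodType R[i]) (ip : H -> H -> R[i]) :
  is_inner_product ip -> forall x y u w (p q p' q' : R[i]),
  ip (p *: x + q *: y) (p' *: u + q' *: w) =
  p * p'^* * ip x u + p * q'^* * ip x w + q * p'^* * ip y u + q * q'^* * ip y w.
Proof.
move=> /ipZD [hZ hD hZr hDr] x y u w p q p' q'.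
rewrite hD !hZ !hDr !hZr !mulrDr !mulrA addrA.
by rewrite [p * _ * _ + _ + _]addrAC.
Qed.

Lemma ip2R (R : realType) (H : lmodType R[i]) (ip : H -> H -> R[i]) :
  is_inner_product ip -> forall x y u w (p q p' q' : R),
  ip (p%:C *: x + q%:C *: y) (p'%:C *: u + q'%:C *: w) =
  p%:C * p'%:C * ip x u + p%:C * q'%:C * ip x w + q%:C * p'%:C * ip y u
   + q%:C * q'%:C * ip y w.
Proof. move=> hip x y u w p q p' q'.
have cj : forall z : R, z -i* 0 = z%:C by move=> z; congr Complex; rewrite oppr0.
by rewrite (ip2 hip) /Num.conj /= !cj. Qed.

Lemma ip2l (R : realType) (H : lmodType R[i]) (ip : H -> H -> R[i]) :
  is_inner_product ip -> forall x y z (p q : R[i]),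
  ip (p *: x + q *: y) z = p * ip x z + q * ip y z.
Proof. by move=> /ipZD [hZ hD _ _] x y z p q; rewrite hD !hZ. Qed.

Lemma ip2r (R : realType) (H : lmodType R[i]) (ip : H -> H -> R[i]) :
  is_inner_product ip -> forall x y z (p q : R[i]),
  ip z (p *: x + q *: y) = p^* * ip z x + q^* * ip z y.
Proof. by move=> /ipZD [_ _ hZr hDr] x y z p q; rewrite hDr !hZr. Qed.

Ltac neqs := repeat match goal with H : is_true (?a != ?b) |- _ =>
  let H1 := fresh in let H2 := fresh in
  have H1 := negbTE H; rewrite eq_sym in H; have H2 := negbTE H; clear H;
  rewrite ?H1 ?H2; clear H1 H2 end.

Lemma grot_orth (R : realType) (H : lmodType R[i]) (ip : H -> H -> R[i])
  (G : nat -> H) (k m : nat) (c s : R) :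
  is_inner_product ip -> ip_orthonormal ip G -> k != m -> c ^+ 2 + s ^+ 2 = 1 ->
  ip_orthonormal ip (grot G k m c s).
Proof.
move=> hip hG km h1 i j.
have ip2' := ip2R hip; have ipl := ip2l hip; have ipr := ip2r hip.
rewrite /grot.
have t1 : (true%:R : R[i]) = 1 by [].
have f0 : (false%:R : R[i]) = 0 by [].
case: (eqVneq i k) => [->|ik]; case: (eqVneq j k) => [jk|jk]; try subst j;
 rewrite ?eqxx.
- rewrite ip2' !hG; neqs; rewrite ?eqxx ?t1 ?f0 !mulr0 !addr0 !mulr1.
  by rewrite -!rmorphM -rmorphD /= -!expr2 h1.
- case: (eqVneq j m) => [jm|jm]; try subst j; rewrite ?eqxx.
    rewrite ip2' !hG; neqs; rewrite ?eqxx ?t1 ?f0 !mulr0 !addr0 !mulr1.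
    by rewrite -!rmorphM -rmorphD /= mulrN mulrC addNr.
  by rewrite ipl !hG; neqs; rewrite ?f0 !mulr0 addr0.
- case: (eqVneq i m) => [im|im]; try subst i; rewrite ?eqxx.
    rewrite ip2' !hG; neqs; rewrite ?eqxx ?t1 ?f0 !mulr0 !addr0 !mulr1.
    by rewrite -!rmorphM -rmorphD /= mulNr mulrC addNr.
  by rewrite ipr !hG; neqs; rewrite ?f0 !mulr0 addr0.
- case: (eqVneq i m) => [im|im]; case: (eqVneq j m) => [jm|jm]; try subst i; try subst j;
   rewrite ?eqxx.
  + rewrite ip2' !hG; neqs; rewrite ?eqxx ?t1 ?f0 !mulr0 !addr0 !mulr1.
    by rewrite -!rmorphM -rmorphD /= mulrNN -!expr2 addrC h1.
  + by rewrite ipl !hG; neqs; rewrite ?f0 !mulr0 addr0.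
  + by rewrite ipr !hG; neqs; rewrite ?f0 !mulr0 addr0.
  + by rewrite hG.
Qed.


Lemma D2 (R : realType) (H : lmodType R[i]) (D : H -> Prop) :
  is_subspace D -> forall (p q : R[i]) x y, D x -> D y -> D (p *: x + q *: y).
Proof.
case=> D0 Dl p q x y Dx Dy; apply Dl => //.
by rewrite -[_ *: y]addr0; apply Dl.
Qed.

Lemma E2 (R : realType) (H : lmodType R[i]) (D : H -> Prop) (E : H -> H) :
  is_subspace D -> linear_on D E ->
  forall (p q : R[i]) x y, D x -> D y -> E (p *: x + q *: y) = p *: E x + q *: E y.
Proof.
move=> hD hE p q x y Dx Dy; have [D0 Dl] := hD.
have E0 : E 0 = 0.
  have h := hE 1 0 0 D0 D0; rewrite scaler0 addr0 scale1r in h.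
  by move/(congr1 (fun t => t - E 0)): h; rewrite subrr addrK.
rewrite hE //; last by rewrite -[_ *: y]addr0; apply Dl.
by rewrite -[_ *: y]addr0 hE // E0 addr0.
Qed.

Lemma ipE_real (R : realType) (H : lmodType R[i]) (ip : H -> H -> R[i])
  (D : H -> Prop) (E : H -> H) :
  is_inner_product ip -> (forall f g, D f -> D g -> ip (E f) g = ip f (E g)) ->
  forall x, D x -> ip (E x) x = (complex.Re (ip (E x) x))%:C.
Proof.
move=> [_ hc _ _] hs x Dx.
have : ip (E x) x = (ip (E x) x)^* by rewrite -hc hs.
case: (ip (E x) x) => a b /= [] hb.
have -> : b = 0 by lra.
by [].
Qed.

Lemma addNconj (R : realType) (z : R[i]) :
  z + Num.conj z = (2 * complex.Re z)%:C.
Proof.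
case: z => a b; rewrite /Num.conj /=.
by congr Complex; rewrite /= ?mulr2n ?mul2r ?subrr ?mulr2n //; lra.
Qed.

Lemma addNconjc (R : realType) (z : R[i]) :
  z + z^*%C = (2 * complex.Re z)%:C.
Proof.
case: z => a b /=.
by congr Complex; rewrite /= ?mulr2n ?mul2r ?subrr ?mulr2n //; lra.
Qed.

Lemma ipE_quad (R : realType) (H : lmodType R[i]) (ip : H -> H -> R[i])
  (D : H -> Prop) (E : H -> H) :
  is_inner_product ip -> densely_defined_symmetric ip D E ->
  forall x y (p q : R), D x -> D y ->
  ip (E (p%:C *: x + q%:C *: y)) (p%:C *: x + q%:C *: y) =
  (p ^+ 2 * complex.Re (ip (E x) x) + 2 * p * q * complex.Re (ip (E x) y)
     + q ^+ 2 * complex.Re (ip (E y) y))%:C.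
Proof.
move=> hip [hD _ hE hs] x y p q Dx Dy.
have hc := hip; case: hc => [_ hc _ _].
rewrite (E2 hD hE) // (ip2R hip).
rewrite (ipE_real hip hs Dx) (ipE_real hip hs Dy).
have -> : ip (E y) x = (ip (E x) y)^*%C by rewrite hs // hc.
have mid : p%:C * q%:C * ip (E x) y + q%:C * p%:C * (ip (E x) y)^*%C =
   (2 * p * q * complex.Re (ip (E x) y))%:C.
  rewrite [q%:C * _]mulrC -mulrDr addNconjc -!rmorphM /=.
  by congr (_ %:C); ring.
rewrite -[X in X + _ = _]addrA mid.
by rewrite !rmorphD !rmorphM /=.
Qed.


Lemma dmono (R : realType) (d : nat -> R) :
  (forall i, d i <= d i.+1) -> forall k i, (k <= i)%N -> d k <= d i.
Proof.
move=> hd k i; elim: i => [|i IH]; first by rewrite leqn0 => /eqP ->.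
rewrite leq_eqVlt => /orP [/eqP ->//|]; rewrite ltnS => /IH h.
exact: le_trans h (hd i).
Qed.

Lemma sumS (R : realType) (g : nat -> R) n :
  \sum_(i < n.+1) g i = \sum_(i < n) g i + g n.
Proof. by rewrite big_ord_recr. Qed.

Lemma sum2 (R : realType) (h : nat -> R) p q n :
  p != q -> (forall i, i != p -> i != q -> h i = 0) ->
  \sum_(i < n) h i = (if (p < n)%N then h p else 0) + (if (q < n)%N then h q else 0).
Proof.
move=> pq hh; elim: n => [|n IH]; first by rewrite big_ord0 !ltn0 addr0.
rewrite sumS IH !ltnS (leq_eqVlt p) (leq_eqVlt q).
case: (eqVneq p n) => [pn|pn]; case: (eqVneq q n) => [qn|qn] /=.
- by move: pq; rewrite pn qn eqxx.
- by rewrite pn ltnn add0r addrC.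
- by rewrite qn ltnn addr0.
- by rewrite (hh n) 1?eq_sym // addr0.
Qed.

Lemma sum_diff (R : realType) (d mu mu' : nat -> R) n :
  \sum_(i < n) (d i - mu' i) =
  \sum_(i < n) (d i - mu i) + \sum_(i < n) (mu i - mu' i).
Proof. by rewrite -big_split /=; apply: eq_bigr => i _; ring. Qed.



Lemma sum_grow (R : realType) (g : nat -> R) k n :
  (forall i, (k <= i)%N -> (i < n)%N -> 0 < g i) -> (k < n)%N ->
  \sum_(i < k) g i < \sum_(i < n) g i.
Proof.
move=> hg; elim: n hg => [|n IH] hg //; rewrite ltnS leq_eqVlt => /orP [/eqP kn|lt].
  by rewrite -kn sumS ltrDl; apply: hg; rewrite ?kn ?leqnn ?ltnSn.
rewrite sumS; apply: (lt_le_trans (IH _ lt)); first by move=> i ki ilt; apply: hg => //; apply: ltnW.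
by rewrite lerDl ltW // hg // ltnW.
Qed.

Lemma sum_nneg_from (R : realType) (g : nat -> R) k n :
  (forall i, (k < i)%N -> (i < n)%N -> 0 <= g i) -> 0 <= \sum_(i < k.+1) g i ->
  (k < n)%N -> 0 <= \sum_(i < n) g i.
Proof.
move=> hg h0; elim: n hg => [|n IH] hg //; rewrite ltnS leq_eqVlt => /orP [/eqP <-//|lt].
rewrite sumS; apply: addr_ge0; first by apply: IH => // i ki ilt; apply: hg => //; apply: ltnW.
exact: hg.
Qed.


Definition mu (R : realType) (H : lmodType R[i]) (ip : H -> H -> R[i]) (E : H -> H)
  (G : nat -> H) (i : nat) : R := complex.Re (ip (E (G i)) (G i)).

Definition Q (R : realType) (H : lmodType R[i]) (ip : H -> H -> R[i]) (E : H -> H)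
  (d : nat -> R) (G : nat -> H) (n : nat) : R := \sum_(i < n) (d i - mu ip E G i).

Lemma QS (R : realType) (H : lmodType R[i]) (ip : H -> H -> R[i]) (E : H -> H)
  (d : nat -> R) (G : nat -> H) (n : nat) :
  Q ip E d G n.+1 = Q ip E d G n + (d n - mu ip E G n).
Proof. exact: (sumS (fun i => d i - mu ip E G i)). Qed.

Lemma step (R : realType) (H : lmodType R[i]) (ip : H -> H -> R[i]) (D : H -> Prop)
  (E : H -> H) (d : nat -> R) (G : nat -> H) (k : nat) :
  is_inner_product ip -> densely_defined_symmetric ip D E -> (forall i, d i <= d i.+1) ->
  (forall i, D (G i)) -> ip_orthonormal ip G -> (forall n, 0 <= Q ip E d G n) ->
  Q ip E d G k = 0 -> (exists z, (k < z)%N /\ Q ip E d G z = 0) ->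
  exists G' : nat -> H,
   [/\ (forall i, D (G' i)), ip_orthonormal ip G', (forall n, 0 <= Q ip E d G' n),
       (forall i, (i < k)%N -> G' i = G i) & [/\ mu ip E G' k = d k,
       (forall i, exists n, sp G n (G' i)) &
       (forall z, Q ip E d G z = 0 ->
          Q ip E d G' z = 0 /\ forall i, (i < z)%N -> sp G' z (G i))]].
Proof.
move=> hip hDE hd hD hO hQ hk0 [z [kz hz]].
have hQk1 := hQ k.+1; rewrite QS hk0 add0r subr_ge0 in hQk1.
case: (ltP (mu ip E G k) (d k)) => [lt|ge]; last first.
  have muk : mu ip E G k = d k by apply/eqP; rewrite eq_le hQk1 ge.
  exists G; split => //; split => //.
  - by move=> i; exists i.+1; apply: sp_g.
  - by move=> z' ->; split => // i iz; apply: sp_g.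
pose m := mu ip E G.
have witn : forall z', (k < z')%N -> Q ip E d G z' = 0 ->
    exists2 i, (k <= i < z')%N & d k <= m i.
  move=> z' kz' hz'.
  have : [exists i : 'I_z', (k <= i)%N && (d k <= m i)].
    apply: contraT => /existsPn hn.
    have : Q ip E d G k < Q ip E d G z'.
      apply: (@sum_grow R (fun i => d i - mu ip E G i)) => // i ki iz.
      have := hn (Ordinal iz); rewrite /= ki /= -ltNge => h.
      by rewrite subr_gt0; apply: lt_le_trans h (dmono hd ki).
    by rewrite hk0 hz' ltxx.
  by case/existsP => -[i iz] /= /andP [ki hi]; exists i => //; rewrite ki iz.
have [i /andP [ki iz] hi] := witn z kz hz.
have exP : exists j, d k <= m (k + j)%N by exists (i - k)%N; rewrite subnKC.
case: (ex_minnP exP) => J hJ Jmin.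
have J0 : (0 < J)%N.
  by case: J hJ Jmin => [|//]; rewrite addn0 => h; move: lt; rewrite ltNge h.
have Jb : forall z', (k < z')%N -> Q ip E d G z' = 0 -> (k + J < z')%N.
  move=> z' kz' hz'; have [i' /andP [ki' iz'] hi'] := witn z' kz' hz'.
  have := Jmin (i' - k)%N; rewrite subnKC // => /(_ hi') h.
  by apply: leq_ltn_trans iz'; rewrite -leq_subRL.
have below : forall i, (k < i)%N -> (i < k + J)%N -> m i < d k.
  move=> i' ki' iJ; rewrite ltNge; apply/negP => h.
  have := Jmin (i' - k)%N; rewrite subnKC ?(ltnW ki') // => /(_ h).
  by rewrite leq_subRL ?(ltnW ki') // leqNgt iJ.
have [c [s [h1 hv]]] := @solver R (m k) (m (k + J)%N) (complex.Re (ip (E (G k)) (G (k + J)%N))) (d k) lt hJ.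
have kJ : k != (k + J)%N by rewrite -{1}[k]addn0 eqn_add2l eq_sym -lt0n.
have [hsub _ _ _] := hDE.
pose G' := grot G k (k + J)%N c s.
have ek : G' k = c%:C *: G k + s%:C *: G (k + J)%N by rewrite /G' /grot eqxx.
have em : G' (k + J)%N = (-s)%:C *: G k + c%:C *: G (k + J)%N.
  by rewrite /G' /grot eqxx eq_sym (negbTE kJ).
have eo : forall i, i != k -> i != (k + J)%N -> G' i = G i.
  by move=> i' a b; rewrite /G' grot_other.
have muk : mu ip E G' k = d k.
  by rewrite /mu ek (ipE_quad hip hDE) //= -hv.
have mum : mu ip E G' k + mu ip E G' (k + J)%N = m k + m (k + J)%N.
  rewrite /mu ek em !(ipE_quad hip hDE) //= -/(m k) -/(m (k + J)%N).
  have hs : s ^+ 2 = 1 - c ^+ 2 by rewrite -h1 addrC addKr.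
  rewrite sqrrN hs; ring.
have muo : forall i, i != k -> i != (k + J)%N -> mu ip E G' i = m i.
  by move=> i' a b; rewrite /mu eo.
have Qrel : forall n, Q ip E d G' n = Q ip E d G n +
   ((if (k < n)%N then m k - mu ip E G' k else 0) +
    (if (k + J < n)%N then m (k + J)%N - mu ip E G' (k + J)%N else 0)).
  move=> n; rewrite /Q (sum_diff d (mu ip E G)) -/(Q ip E d G n); congr (_ + _).
  by rewrite (@sum2 R (fun i => m i - mu ip E G' i) _ _ n kJ) // => i' a b; rewrite muo ?subrr.
have Qk : Q ip E d G' k = 0.
  by rewrite Qrel ltnn ltnNge leq_addr /= addr0 addr0 hk0.
have zsum : (m k - mu ip E G' k) + (m (k + J)%N - mu ip E G' (k + J)%N) = 0.
  by move: mum; lra.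
exists G'; split.
- move=> i'; rewrite /G' /grot; case: ifP => _; [|case: ifP => _];
    by [apply: (D2 hsub) | apply: hD].
- exact: grot_orth hip hO kJ h1.
- move=> n; case: (leqP n k) => nk.
    rewrite Qrel ltnNge nk ltnNge (leq_trans nk (leq_addr J k)) /= !addr0; exact: hQ.
  case: (leqP n (k + J)%N) => nJ.
    apply: (@sum_nneg_from R (fun i => d i - mu ip E G' i) k n) => //.
      move=> i' ki' iJ; have iJ' : (i' < k + J)%N by apply: leq_trans nJ.
      rewrite subr_ge0 muo; last by rewrite ltn_eqF.
        exact: le_trans (ltW (below i' ki' iJ')) (dmono hd (ltnW ki')).
      by rewrite gtn_eqF.
    by rewrite -/(Q ip E d G' k.+1) QS Qk muk subrr addr0.
  by rewrite Qrel nk nJ zsum addr0; apply: hQ.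
- move=> i' ik; apply: eo; first by rewrite ltn_eqF.
  by rewrite ltn_eqF // (leq_trans ik (leq_addr J k)).
split => //.
- by move=> i'; eexists; exact: grot_fwd.
- move=> z' hz'; case: (leqP z' k) => zk.
    split.
      by rewrite Qrel ltnNge zk ltnNge (leq_trans zk (leq_addr J k)) /= !addr0.
    move=> i' iz2; have ik := leq_trans iz2 zk.
    rewrite -eo; first by apply: sp_g.
      by rewrite ltn_eqF.
    by rewrite ltn_eqF // (leq_trans ik (leq_addr J k)).
  have kJz := Jb z' zk hz'.
  split; first by rewrite Qrel zk kJz zsum addr0.
  move=> i' iz2; exact: grot_inv.
Qed.


Theorem lemma2p5 (R : realType) (H : lmodType R[i]) (ip : H -> H -> R[i])
  (D : H -> Prop) (E : H -> H) (d lam : nat -> R) (f : nat -> H) :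
  is_hilbert ip ->
  densely_defined_symmetric ip D E ->
  (forall i, d i <= d i.+1) ->
  (forall i, lam i <= lam i.+1) ->
  (forall k, 0 <= \sum_(i < k.+1) (d i - lam i)) ->
  (forall N, exists2 k, (N <= k)%N & \sum_(i < k.+1) (d i - lam i) = 0) ->
  (forall i, D (f i)) ->
  ip_orthonormal ip f ->
  (forall i, ip (E (f i)) (f i) = (lam i)%:C) ->
  exists e : nat -> H,
    [/\ ip_orthonormal ip e,
        (forall i, in_span f (e i)),
        (forall v, in_closed_span ip e v <-> in_closed_span ip f v) &
        (forall i, ip (E (e i)) (e i) = (d i)%:C)].
Proof.
move=> [hip _] hDE hd _ hpos hzero hDf hOf hlam.
have hs : forall g h, D g -> D h -> ip (E g) h = ip g (E h) by case: hDE.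
pose Pre k G := [/\ (forall i, D (G i)), ip_orthonormal ip G,
   (forall n, 0 <= Q ip E d G n), Q ip E d G k = 0 &
   exists z, (k < z)%N /\ Q ip E d G z = 0].
pose Post k (G G' : nat -> H) :=
   [/\ (forall i, D (G' i)), ip_orthonormal ip G', (forall n, 0 <= Q ip E d G' n),
       (forall i, (i < k)%N -> G' i = G i) & [/\ mu ip E G' k = d k,
       (forall i, exists n, sp G n (G' i)) &
       (forall z, Q ip E d G z = 0 ->
          Q ip E d G' z = 0 /\ forall i, (i < z)%N -> sp G' z (G i))]].
have stepex : forall k G, exists G', Pre k G -> Post k G G'.
  move=> k G; case: (classic (Pre k G)) => [[h1 h2 h3 h4 h5]|hn].
    have [G' hG'] := step hip hDE hd h1 h2 h3 h4 h5.
    by exists G'.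
  by exists G.
pose nx k G := proj1_sig (constructive_indefinite_description _ (stepex k G)).
have nxP : forall k G, Pre k G -> Post k G (nx k G).
  by move=> k G; exact: (proj2_sig (constructive_indefinite_description _ (stepex k G))).
pose Gs := fix Gs n := match n with 0%N => f | n'.+1 => nx n' (Gs n') end.
have Qf : forall n, Q ip E d f n = \sum_(i < n) (d i - lam i).
  by move=> n; apply: eq_bigr => i _; rewrite /mu hlam.
pose Inv k := [/\ (forall i, D (Gs k i)), ip_orthonormal ip (Gs k),
   (forall n, 0 <= Q ip E d (Gs k) n), (forall i, in_span f (Gs k i)) &
   [/\ (forall i, (i < k)%N -> mu ip E (Gs k) i = d i) &
   (forall z, Q ip E d f z = 0 ->
      Q ip E d (Gs k) z = 0 /\ forall i, (i < z)%N -> sp (Gs k) z (f i))]].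
have InvPre : forall k, Inv k -> Pre k (Gs k).
  move=> k [h1 h2 h3 h4 [h5 h6]]; split => //.
    by rewrite /Q big1 // => i _; rewrite h5 ?subrr.
  have [k' kk' hk'] := hzero k.
  have := h6 k'.+1; rewrite Qf => /(_ hk') [hz _].
  by exists k'.+1.
have Inv0 : Inv 0%N.
  split => //.
  - by case=> [|n]; rewrite Qf ?big_ord0.
  - by move=> i; apply/in_span_sp; exists i.+1; apply: sp_g.
  - split => // z hz; split => // i iz; exact: sp_g.
have InvS : forall k, Inv k -> Inv k.+1.
  move=> k hI; have [h1 h2 h3 h4 [h5 h6]] := hI.
  have [p1 p2 p3 p4 [p5 p6 p7]] := nxP k (Gs k) (InvPre k hI).
  rewrite /Inv /=; split => //.
  - move=> i; apply: (in_span_trans h4); apply/in_span_sp; exact: p6.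
  - split.
      move=> i; rewrite ltnS leq_eqVlt => /orP [/eqP ->//|ik].
      by rewrite /mu p4 // -/(mu ip E (Gs k) i) h5.
    move=> z hz; have [q1 q2] := h6 z hz; have [r1 r2] := p7 z q1.
    by split => // i iz; apply: (sp_trans r2); apply: q2.
have Inv_all : forall k, Inv k by elim=> [|k IH]; [exact: Inv0 | exact: InvS].
have frozen : forall k i, (i < k)%N -> Gs k i = Gs i.+1 i.
  move=> k i; elim: k => [//|k IH].
  rewrite ltnS leq_eqVlt => /orP [/eqP ->//|ik].
  have [_ _ _ p4 _] := nxP k (Gs k) (InvPre k (Inv_all k)).
  by rewrite /= p4 // IH.
pose e i := Gs i.+1 i.
have eS : forall i, in_span f (e i) by move=> i; have [_ _ _ h4 _] := Inv_all i.+1; apply: h4.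
have fS : forall i, in_span e (f i).
  move=> i; have [k ik hk] := hzero i.
  have [_ _ _ _ [_ h6]] := Inv_all k.+1.
  have [_ h] := h6 k.+1 (etrans (Qf _) hk).
  apply/in_span_sp; exists k.+1; apply: (sp_ext _ (h i _)); last by rewrite ltnS.
  by move=> j jk; rewrite frozen.
exists e; split.
- move=> i j; have [_ h2 _ _ _] := Inv_all (maxn i j).+1.
  rewrite /e -(frozen (maxn i j).+1 i) ?ltnS ?leq_maxl //.
  by rewrite -(frozen (maxn i j).+1 j) ?ltnS ?leq_maxr.
- exact: eS.
- move=> v; split => hv eps ep; have [w [hw hd']] := hv eps ep; exists w; split => //.
    exact: in_span_trans eS hw.
  exact: in_span_trans fS hw.
- move=> i; have [h1 _ _ _ [h5 _]] := Inv_all i.+1.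
  by rewrite (ipE_real hip hs (h1 i)) -/(mu ip E (Gs i.+1) i) h5.
Qed.
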